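(* Let $\alpha\in(0,1)$ and let the walk start at $X_0=[\alpha N]$. Write $a=\alpha\wedge(1-\alpha)$ and $b=\alpha\vee(1-\alpha)$. (i) For the symmetric walk, $R_N/N$ converges in distribution as $N\to\infty$ to the absolutely continuous probability measure $G_{0,\alpha}$ on $[a,1]$. This measure is characterized by the fact that for every $\beta\ge0$, $$\lim_{N\to\infty}P_{[\alpha N]}(R_N/N\ge\beta)=\begin{cases}1,&0\le\beta\le a,\\ \dfrac{a}{\beta},& a<\beta<b,\\ \dfrac{1-\beta}{\beta},& b\le\beta\le1,\\ 0,&\beta>1.\end{cases}$$ Equivalently, $G_{0,\alpha}$ has density $g_\alpha(\beta)=a/\beta^2$ for $a<\beta<b$, $g_\alpha(\beta)=1/\beta^2$ for $b\le\beta\le1$, and $g_\alpha(\beta)=0$ otherwise. (ii) For the weakly asymmetric walk with parameter $c>0$, $R_N/N$ converges in distribution to the absolutely continuous probability measure $G_{c,\alpha}$ on $[a,1]$. This measure is characterized by the fact that for every $\beta\ge0$, $$\lim_{N\to\infty}P_{[\alpha N]}(R_N/N\ge\beta)=\begin{cases}1,&0\le\beta\le a,\\ \dfrac{1-e^{-4c\alpha}}{1-e^{-4c\beta}},&\alpha\le\beta\le1-\alpha,\\ \dfrac{1-e^{4c(1-\alpha)}}{1-e^{4c\beta}},&1-\alpha\le\beta\le\alpha,\\ \dfrac{e^{-4c\alpha}\big(e^{4c(1-\beta)}-1\big)}{1-e^{-4c\beta}},& b\le\beta\le1,\\ 0,&\beta>1.\end{cases}$$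
   Context: Fix $N\ge2$ and let $\mathcal T_N=\{0,1,\dots,N\}$. Let $(X_n)_{n\ge0}$ be a nearest-neighbour random walk on $\mathcal T_N$. At each step it moves from its current position $x$ to $x+1$ with probability $p_N$ and to $x-1$ with probability $q_N=1-p_N$, independently of the past. The walk is stopped the first time it is at $0$ or $N$. $P_x$ denotes the law of the walk started at $X_0=x$. The walk is called: - symmetric if $p_N=q_N=1/2$; - weakly asymmetric (with parameter $c>0$ fixed) if $q_N=1/2-c/N$ and $p_N=1/2+c/N$, for $N$ large enough that these lie in $(0,1)$; - asymmetric if $p_N=p$ and $q_N=q$ are fixed with $p+q=1$ and $q<p$. For $a\in\mathcal T_N$ let $T_a=\inf\{n\ge1:X_n=a\}$, and let $\tau_N=T_0\wedge T_N$ (the exit time). Let $G(y)=\sum_{k=0}^{\tau_N}\mathbf 1\{X_k=y\}$ be the number of visits to $y$ up to and including the exit time. The range is $R_N=\#\{y\in\mathcal T_N:G(y)\ge1\}$. Throughout, $[\cdot]$ denotes the integer part. *)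

(* Defs.v *)
From Stdlib Require Import Reals Lra Arith List Bool ClassicalEpsilon ZArith.
Import ListNotations.
Open Scope R_scope.

Definition step (N x : nat) (up : bool) : nat :=
  if (Nat.eqb x 0 || Nat.eqb x N)%bool then x
  else if up then S x else Nat.pred x.

Fixpoint traj (N x : nat) (l : list bool) : list nat :=
  x :: match l with
       | nil => nil
       | b :: l' => traj N (step N x b) l'
       end.

Fixpoint weight (p : R) (l : list bool) : R :=
  match l with
  | nil => 1
  | true :: l' => p * weight p l'
  | false :: l' => (1 - p) * weight p l'
  end.

Fixpoint paths (n : nat) : list (list bool) :=
  match n with
  | O => [nil]
  | S n' => map (cons true) (paths n') ++ map (cons false) (paths n')
  end.

Definition range_upto (N x : nat) (l : list bool) : nat :=
  length (filter (fun y => existsb (Nat.eqb y) (traj N x l)) (seq 0 (S N))).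

Definition prob_range_ge_upto (N : nat) (p : R) (x : nat) (beta : R) (n : nat) : R :=
  fold_right Rplus 0
    (map (fun l => if Rle_dec (beta * INR N) (INR (range_upto N x l))
                   then weight p l else 0) (paths n)).

(** Limit of a real sequence (chosen classically; meaningful when it exists). *)
Definition Rlim (u : nat -> R) : R := epsilon (inhabits 0) (fun l => Un_cv u l).

(** P_x(R_N >= beta N) = P_x(R_N/N >= beta): the event is increasing in the
    time horizon, so its probability is the (monotone) limit over n. *)
Definition prob_range_ge (N : nat) (p : R) (x : nat) (beta : R) : R :=
  Rlim (fun n => prob_range_ge_upto N p x beta n).

Definition start (alpha : R) (N : nat) : nat := Z.to_nat (Int_part (alpha * INR N)).

(* Main.v *)
Require Import Defs.
From Stdlib Require Import Reals Lra Lia Arith List Bool ClassicalEpsilon ZArith.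
Import ListNotations.
Open Scope R_scope.

Definition st := (nat * nat * nat)%type.

Definition nxt (N : nat) (s : st) (b : bool) : st :=
  let '(x, lo, hi) := s in
  let x' := step N x b in (x', Nat.min lo x', Nat.max hi x').

Fixpoint V (N : nat) (p : R) (n : nat) (g : st -> R) (s : st) : R :=
  match n with
  | O => g s
  | S n' => p * V N p n' g (nxt N s true) + (1 - p) * V N p n' g (nxt N s false)
  end.

Fixpoint fin (N : nat) (s : st) (l : list bool) : st :=
  match l with nil => s | b :: l' => fin N (nxt N s b) l' end.

Definition SumP (n : nat) (F : list bool -> R) : R := fold_right Rplus 0 (map F (paths n)).

Lemma fr_app (l1 l2 : list R) :
  fold_right Rplus 0 (l1 ++ l2) = fold_right Rplus 0 l1 + fold_right Rplus 0 l2.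
Proof. induction l1; simpl; [ring | rewrite IHl1; ring]. Qed.

Lemma fr_scal (A : Type) (c : R) (F : A -> R) (l : list A) :
  fold_right Rplus 0 (map (fun a => c * F a) l) = c * fold_right Rplus 0 (map F l).
Proof. induction l; simpl; [ring | rewrite IHl; ring]. Qed.

Lemma SumP_S n F : SumP (S n) F =
  SumP n (fun l => F (true :: l)) + SumP n (fun l => F (false :: l)).
Proof.
  unfold SumP; simpl. rewrite map_app, fr_app, !map_map. reflexivity.
Qed.

Lemma SumP_ext n F G : (forall l, F l = G l) -> SumP n F = SumP n G.
Proof. intros H; unfold SumP; rewrite (map_ext F G H); reflexivity. Qed.

Lemma V_SumP N p n : forall g s,
  V N p n g s = SumP n (fun l => weight p l * g (fin N s l)).
Proof.
  induction n; intros g s.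
  - unfold SumP; simpl. ring.
  - rewrite SumP_S. simpl V. rewrite !IHn.
    rewrite (SumP_ext n (fun l => weight p (true :: l) * g (fin N s (true :: l)))
                        (fun l => p * (weight p l * g (fin N (nxt N s true) l))))
      by (intros; simpl; ring).
    rewrite (SumP_ext n (fun l => weight p (false :: l) * g (fin N s (false :: l)))
                        (fun l => (1 - p) * (weight p l * g (fin N (nxt N s false) l))))
      by (intros; simpl; ring).
    unfold SumP; rewrite !fr_scal. reflexivity.
Qed.

Definition valid (N : nat) (s : st) : Prop :=
  let '(x, lo, hi) := s in (lo <= x <= hi /\ hi <= N)%nat.

Lemma step_props N x b : (x <= N)%nat ->
  (step N x b <= N)%nat /\ (step N x b = x \/ step N x b = S x \/ S (step N x b) = x)%nat.
Proof.
  intros Hx; unfold step.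
  destruct (Nat.eqb_spec x 0), (Nat.eqb_spec x N), b; simpl; lia.
Qed.

Lemma nxt_valid N s b : valid N s -> valid N (nxt N s b).
Proof.
  destruct s as [[x lo] hi]; simpl; intros H.
  destruct (step_props N x b) as [H1 H2]; lia.
Qed.

Lemma count_int lo hi m : (lo <= hi)%nat ->
  length (filter (fun y => (lo <=? y)%nat && (y <=? hi)%nat) (seq 0 m)) = (Nat.min (S hi) m - lo)%nat.
Proof.
  intros Hl; induction m.
  - simpl. lia.
  - rewrite seq_S, filter_app, length_app, IHm. cbn [filter Nat.add].
    destruct (Nat.leb_spec lo m), (Nat.leb_spec m hi); cbn [andb length]; lia.
Qed.

Lemma traj_head N x l : exists r, traj N x l = x :: r.
Proof. destruct l; simpl; eauto. Qed.

Lemma range_gen N l : forall x lo hi, valid N (x, lo, hi) ->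
  length (filter (fun y => ((lo <=? y)%nat && (y <=? hi)%nat) || existsb (Nat.eqb y) (traj N x l))
     (seq 0 (S N))) =
  (let '(x', lo', hi') := fin N (x, lo, hi) l in hi' - lo' + 1)%nat.
Proof.
  induction l as [|b l IH]; intros x lo hi Hv.
  - cbn [fin]. simpl in Hv. rewrite (filter_ext _ (fun y => (lo <=? y)%nat && (y <=? hi)%nat)).
    + rewrite count_int by lia. lia.
    + intros y. cbn [traj existsb]. destruct (Nat.leb_spec lo y), (Nat.leb_spec y hi), (Nat.eqb_spec y x); cbn [andb orb]; try reflexivity; lia.
  - simpl fin. simpl in Hv.
    destruct (step_props N x b ltac:(lia)) as [H1 H2].
    rewrite <- IH by (simpl; lia).
    f_equal. apply filter_ext. intros y.
    simpl traj. destruct (traj_head N (step N x b) l) as [r Hr]. rewrite Hr.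
    simpl existsb.
    destruct (Nat.leb_spec lo y), (Nat.leb_spec y hi), (Nat.eqb_spec y x),
      (Nat.eqb_spec y (step N x b)), (existsb (Nat.eqb y) r),
      (Nat.leb_spec (Nat.min lo (step N x b)) y), (Nat.leb_spec y (Nat.max hi (step N x b)));
      simpl; try reflexivity; lia.
Qed.

Lemma range_fin N x l : (x <= N)%nat ->
  range_upto N x l = (let '(x', lo', hi') := fin N (x, x, x) l in hi' - lo' + 1)%nat.
Proof.
  intros Hx. rewrite <- range_gen by (simpl; lia).
  unfold range_upto. f_equal. apply filter_ext. intros y.
  destruct (traj_head N x l) as [r Hr]. rewrite Hr. simpl existsb.
  destruct (Nat.leb_spec x y), (Nat.leb_spec y x), (Nat.eqb_spec y x); simpl; try reflexivity; lia.
Qed.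

Definition gind (N : nat) (beta : R) (s : st) : R :=
  let '(x, lo, hi) := s in
  if Rle_dec (beta * INR N) (INR (hi - lo + 1)) then 1 else 0.

Lemma upto_V N p x beta n : (x <= N)%nat ->
  prob_range_ge_upto N p x beta n = V N p n (gind N beta) (x, x, x).
Proof.
  intros Hx. rewrite V_SumP. unfold prob_range_ge_upto.
  change (fold_right Rplus 0 (map ?F (paths n))) with (SumP n F).
  apply SumP_ext. intros l. rewrite range_fin by exact Hx.
  unfold gind. destruct (fin N (x, x, x) l) as [[a b] c].
  destruct Rle_dec; ring.
Qed.

Section VP.
Variables (N : nat) (p : R).

Lemma V_mono n : forall (g1 g2 : st -> R) s, 0 <= p <= 1 ->
  (forall s, valid N s -> g1 s <= g2 s) -> valid N s -> V N p n g1 s <= V N p n g2 s.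
Proof.
  induction n; intros g1 g2 s Hp H Hs; simpl; auto.
  pose proof (IHn g1 g2 (nxt N s true) Hp H (nxt_valid _ _ _ Hs)).
  pose proof (IHn g1 g2 (nxt N s false) Hp H (nxt_valid _ _ _ Hs)).
  nra.
Qed.

Lemma V_minus n : forall g1 g2 s,
  V N p n (fun s => g1 s - g2 s) s = V N p n g1 s - V N p n g2 s.
Proof. induction n; intros; simpl; auto. rewrite !IHn; ring. Qed.

Lemma V_scal n : forall c g s, V N p n (fun s => c * g s) s = c * V N p n g s.
Proof. induction n; intros; simpl; auto. rewrite !IHn; ring. Qed.

Lemma V_const n : forall c s, V N p n (fun _ => c) s = c.
Proof. induction n; intros; simpl; auto. rewrite !IHn; ring. Qed.

Lemma V_ext n : forall g1 g2 s, (forall s, valid N s -> g1 s = g2 s) -> valid N s ->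
  V N p n g1 s = V N p n g2 s.
Proof.
  induction n; intros g1 g2 s H Hs; simpl; auto.
  rewrite (IHn g1 g2 _ H (nxt_valid _ _ _ Hs)), (IHn g1 g2 _ H (nxt_valid _ _ _ Hs)); auto.
Qed.

Lemma V_add m : forall n g s, V N p (m + n) g s = V N p m (V N p n g) s.
Proof. induction m; intros; simpl; auto. rewrite !IHm; auto. Qed.

Lemma V_harm n : forall phi s,
  (forall s, valid N s -> phi s = p * phi (nxt N s true) + (1 - p) * phi (nxt N s false)) ->
  valid N s -> V N p n phi s = phi s.
Proof.
  induction n; intros phi s H Hs; simpl; auto.
  rewrite !IHn; auto using nxt_valid. symmetry; auto.
Qed.

Definition uab (s : st) : R :=
  let '(x, _, _) := s in if (Nat.eqb x 0 || Nat.eqb x N)%bool then 0 else 1.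

Lemma abs_true x : (x = 0 \/ x = N)%nat -> (Nat.eqb x 0 || Nat.eqb x N)%bool = true.
Proof. intros [->| ->]; rewrite Nat.eqb_refl; [reflexivity | apply orb_true_r]. Qed.

Lemma V_uab_abs n : forall x lo hi, (x = 0 \/ x = N)%nat -> V N p n uab (x, lo, hi) = 0.
Proof.
  induction n; intros x lo hi Hx.
  - cbn [V uab]. rewrite abs_true by auto. reflexivity.
  - cbn [V nxt]. unfold step. rewrite abs_true by auto. rewrite !IHn by auto. ring.
Qed.

Lemma uab_bounds s : 0 <= uab s <= 1.
Proof. destruct s as [[x lo] hi]; simpl; destruct (_ || _)%bool; lra. Qed.

Lemma V_uab_bounds n s : 0 <= p <= 1 -> valid N s -> 0 <= V N p n uab s <= 1.
Proof.
  intros Hp Hs; split.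
  - rewrite <- (V_const n 0 s). apply V_mono; auto. intros; apply uab_bounds.
  - rewrite <- (V_const n 1 s). apply V_mono; auto. intros; apply uab_bounds.
Qed.

Lemma V_uab_le n s : 0 <= p <= 1 -> valid N s -> V N p n uab s <= uab s.
Proof.
  intros Hp Hs. destruct s as [[x lo] hi].
  destruct (Nat.eqb_spec x 0) as [->|H0].
  - rewrite V_uab_abs by auto. apply uab_bounds.
  - destruct (Nat.eqb_spec x N) as [->|H1].
    + rewrite V_uab_abs by auto. apply uab_bounds.
    + simpl uab. apply Nat.eqb_neq in H0, H1. rewrite H0, H1. simpl.
      apply V_uab_bounds; auto.
Qed.

Lemma V_uab_step m : forall x lo hi, 0 <= p <= 1 -> valid N (x, lo, hi) -> (N - x <= m)%nat ->
  V N p m uab (x, lo, hi) <= 1 - p ^ m.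
Proof.
  induction m; intros x lo hi Hp Hs Hm.
  - simpl in Hs. assert (x = N) by lia. subst.
    rewrite V_uab_abs by auto. simpl. lra.
  - assert (Hpm : 0 <= p ^ m <= 1).
    { split; [apply pow_le; lra|]. rewrite <- (pow1 m). apply pow_incr; lra. }
    destruct (Nat.eq_dec x 0) as [->|H0].
    { rewrite V_uab_abs by auto. simpl. nra. }
    destruct (Nat.eq_dec x N) as [->|H1].
    { rewrite V_uab_abs by auto. simpl. nra. }
    assert (E : (Nat.eqb x 0 || Nat.eqb x N)%bool = false).
    { apply Nat.eqb_neq in H0, H1. rewrite H0, H1. reflexivity. }
    cbn [V nxt]. unfold step. rewrite E.
    simpl in Hs.
    pose proof (IHm (S x) (Nat.min lo (S x)) (Nat.max hi (S x)) Hp ltac:(simpl; lia) ltac:(lia)).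
    pose proof (V_uab_bounds m (Nat.pred x, Nat.min lo (Nat.pred x), Nat.max hi (Nat.pred x)) Hp
       ltac:(simpl; lia)).
    simpl pow. nra.
Qed.

Lemma V_uab_geo k : forall s, 0 <= p <= 1 -> valid N s ->
  V N p (k * N) uab s <= (1 - p ^ N) ^ k.
Proof.
  induction k; intros s Hp Hs.
  - simpl. pose proof (uab_bounds s). lra.
  - replace (S k * N)%nat with (N + k * N)%nat by lia.
    rewrite V_add.
    assert (H1 : V N p N (V N p (k * N) uab) s <= V N p N (fun s => (1 - p ^ N) ^ k * uab s) s).
    { apply V_mono; auto. intros s' Hs'.
      destruct s' as [[x lo] hi].
      destruct (Nat.eqb x 0 || Nat.eqb x N)%bool eqn:E.
      - apply orb_true_iff in E. rewrite !Nat.eqb_eq in E.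
        rewrite V_uab_abs by auto. simpl uab. rewrite abs_true by auto. lra.
      - simpl uab. rewrite E. rewrite Rmult_1_r. apply IHk; auto. }
    assert (Hq : 0 <= 1 - p ^ N <= 1).
    { assert (0 <= p ^ N <= 1); [split; [apply pow_le; lra|]|lra].
      rewrite <- (pow1 N). apply pow_incr; lra. }
    rewrite V_scal in H1.
    destruct s as [[x lo] hi].
    pose proof (V_uab_step N x lo hi Hp Hs ltac:(lia)).
    pose proof (pow_le _ k (proj1 Hq)).
    simpl pow. nra.
Qed.

Lemma V_uab_lim s : 0 < p <= 1 -> valid N s -> (0 < N)%nat ->
  forall eps, 0 < eps -> exists n0, forall n, (n >= n0)%nat -> V N p n uab s < eps.
Proof.
  intros Hp Hs HN eps He.
  assert (Hq : 0 <= 1 - p ^ N < 1).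
  { assert (0 < p ^ N <= 1); [split; [apply pow_lt; lra|]|lra].
    rewrite <- (pow1 N). apply pow_incr; lra. }
  destruct (pow_lt_1_zero (1 - p ^ N) ltac:(rewrite Rabs_pos_eq; lra) eps He) as [k Hk].
  exists (k * N)%nat. intros n Hn.
  replace n with (k * N + (n - k * N))%nat by lia.
  rewrite V_add.
  apply Rle_lt_trans with (V N p (k * N) uab s).
  - apply V_mono; auto; [lra|]. intros; apply V_uab_le; auto; lra.
  - eapply Rle_lt_trans. apply V_uab_geo; auto; lra.
    specialize (Hk k (le_n _)). rewrite Rabs_pos_eq in Hk; auto. apply pow_le; lra.
Qed.

End VP.

Lemma Rlim_eq u l : Un_cv u l -> Rlim u = l.
Proof.
  intros H. unfold Rlim. apply (UL_sequence u).
  - apply epsilon_spec. eauto.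
  - exact H.
Qed.

Section PHI.
Variables (N K : nat) (p beta : R) (sc : nat -> R).
Hypothesis Hp : 0 < p < 1.
Hypothesis HS0 : sc 0%nat = 0.
Hypothesis HSN : sc N = 1.
Hypothesis HSmono : forall i j, (i < j <= N)%nat -> sc i < sc j.
Hypothesis HSharm : forall x, (0 < x < N)%nat -> sc x = p * sc (S x) + (1 - p) * sc (Nat.pred x).
Hypothesis HK : (2 <= K <= N + 1)%nat.
Hypothesis Hcond : forall m, beta * INR N <= INR m <-> (K <= m)%nat.

Definition Tt := (K - 1)%nat.
Definition Bt := (N + 1 - K)%nat.
Definition Aphi x hi := if (Tt <=? hi)%nat then 1 - sc x else sc x / sc Tt * (1 - sc Tt).
Definition Bphi x lo := if (lo <=? Bt)%nat then sc x else (1 - sc x) / (1 - sc Bt) * sc Bt.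
Definition phi (s : st) : R := let '(x, lo, hi) := s in Aphi x hi + Bphi x lo.

Lemma sc_le i j : (i <= j <= N)%nat -> sc i <= sc j.
Proof. intros H. destruct (Nat.eq_dec i j) as [->|]; [lra|]. left; apply HSmono; lia. Qed.

Lemma sc_bounds i : (i <= N)%nat -> 0 <= sc i <= 1.
Proof. intros H. rewrite <- HS0, <- HSN. split; apply sc_le; lia. Qed.

Lemma scT_pos : 0 < sc Tt.
Proof. rewrite <- HS0. apply HSmono. unfold Tt; lia. Qed.

Lemma scB_lt : sc Bt < 1.
Proof. rewrite <- HSN. apply HSmono. unfold Bt; lia. Qed.

Lemma Aval y h : (h < Tt \/ y = Tt)%nat -> Aphi y h = sc y / sc Tt * (1 - sc Tt).
Proof.
  intros H. pose proof scT_pos. unfold Aphi. destruct (Nat.leb_spec Tt h); [|reflexivity].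
  assert (y = Tt) by lia. subst. field. lra.
Qed.

Lemma Bval y l : (Bt < l \/ y = Bt)%nat -> Bphi y l = (1 - sc y) / (1 - sc Bt) * sc Bt.
Proof.
  intros H. pose proof scB_lt. unfold Bphi. destruct (Nat.leb_spec l Bt); [|reflexivity].
  assert (y = Bt) by lia. subst. field. lra.
Qed.

Lemma A_harm x hi : (0 < x < N)%nat -> (x <= hi)%nat ->
  Aphi x hi = p * Aphi (S x) (Nat.max hi (S x)) + (1 - p) * Aphi (Nat.pred x) hi.
Proof.
  intros Hx Hh. pose proof scT_pos.
  destruct (Nat.leb_spec Tt hi).
  - unfold Aphi. replace (Tt <=? hi)%nat with true by (symmetry; apply Nat.leb_le; lia).
    replace (Tt <=? Nat.max hi (S x))%nat with true by (symmetry; apply Nat.leb_le; lia).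
    rewrite (HSharm x Hx). ring.
  - rewrite (Aval x hi), (Aval (S x)), (Aval (Nat.pred x) hi) by lia.
    rewrite (HSharm x Hx). field. lra.
Qed.

Lemma B_harm x lo : (0 < x < N)%nat -> (lo <= x)%nat ->
  Bphi x lo = p * Bphi (S x) lo + (1 - p) * Bphi (Nat.pred x) (Nat.min lo (Nat.pred x)).
Proof.
  intros Hx Hl. pose proof scB_lt.
  destruct (Nat.leb_spec lo Bt).
  - unfold Bphi. replace (lo <=? Bt)%nat with true by (symmetry; apply Nat.leb_le; lia).
    replace (Nat.min lo (Nat.pred x) <=? Bt)%nat with true by (symmetry; apply Nat.leb_le; lia).
    rewrite (HSharm x Hx). ring.
  - rewrite (Bval x lo), (Bval (S x) lo), (Bval (Nat.pred x)) by lia.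
    rewrite (HSharm x Hx). field. lra.
Qed.

Lemma phi_harm s : valid N s -> phi s = p * phi (nxt N s true) + (1 - p) * phi (nxt N s false).
Proof.
  destruct s as [[x lo] hi]. simpl valid. intros Hv.
  destruct (Nat.eq_dec x 0) as [->|H0].
  - cbn [nxt]. unfold step. simpl Nat.eqb. cbn [orb].
    replace (Nat.min lo 0) with lo by lia. replace (Nat.max hi 0) with hi by lia. ring.
  - destruct (Nat.eq_dec x N) as [->|H1].
    + cbn [nxt]. unfold step. rewrite Nat.eqb_refl, orb_true_r.
      replace (Nat.min lo N) with lo by lia. replace (Nat.max hi N) with hi by lia. ring.
    + assert (E : (Nat.eqb x 0 || Nat.eqb x N)%bool = false).
      { apply Nat.eqb_neq in H0, H1. rewrite H0, H1. reflexivity. }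
      cbn [nxt]. unfold step. rewrite E. unfold phi.
      replace (Nat.min lo (S x)) with lo by lia.
      replace (Nat.max hi (Nat.pred x)) with hi by lia.
      rewrite (A_harm x hi), (B_harm x lo) by lia. ring.
Qed.

Lemma phi_bounds s : valid N s -> 0 <= phi s <= 1.
Proof.
  destruct s as [[x lo] hi]. simpl valid. intros Hv. simpl phi.
  pose proof scT_pos. pose proof scB_lt.
  pose proof (sc_bounds x ltac:(lia)).
  pose proof (sc_bounds Tt ltac:(unfold Tt; lia)).
  pose proof (sc_bounds Bt ltac:(unfold Bt; lia)).
  assert (HA : 0 <= Aphi x hi <= 1 - sc x).
  { unfold Aphi. destruct (Nat.leb_spec Tt hi); [lra|].
    assert (sc x <= sc Tt) by (apply sc_le; unfold Tt in *; lia).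
    unfold Rdiv. set (i := / sc Tt). assert (sc Tt * i = 1) by (unfold i; field; lra).
    assert (0 < i) by (unfold i; apply Rinv_0_lt_compat; lra).
    assert (sc x * i <= sc Tt * i) by (apply Rmult_le_compat_r; lra).
    assert (0 <= sc x * i) by (apply Rmult_le_pos; lra).
    split; [apply Rmult_le_pos; lra|].
    replace (sc x * i * (1 - sc Tt)) with (sc x * i - sc x * (sc Tt * i)) by ring. nra. }
  assert (HB : 0 <= Bphi x lo <= sc x).
  { unfold Bphi. destruct (Nat.leb_spec lo Bt); [lra|].
    assert (sc Bt <= sc x) by (apply sc_le; lia).
    unfold Rdiv. set (i := / (1 - sc Bt)). assert ((1 - sc Bt) * i = 1) by (unfold i; field; lra).
    assert (0 < i) by (unfold i; apply Rinv_0_lt_compat; lra).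
    assert (0 <= (1 - sc x) * i) by (apply Rmult_le_pos; lra).
    split; [apply Rmult_le_pos; lra|].
    replace ((1 - sc x) * i * sc Bt) with (sc Bt * i - sc x * i * sc Bt) by ring.
    replace (sc Bt * i) with (1 - (1 - sc Bt) * i + sc Bt * i) at 1 by lra.
    assert (sc Bt * (1 - sc x) * i <= sc x * (1 - sc Bt) * i).
    { apply Rmult_le_compat_r; [lra|]. nra. }
    nra. }
  lra.
Qed.

Lemma phi_abs s : valid N s -> uab N s = 0 -> phi s = gind N beta s.
Proof.
  destruct s as [[x lo] hi]. simpl valid. intros Hv Hu.
  simpl in Hu. destruct (Nat.eqb_spec x 0) as [->|H0].
  - assert (lo = 0%nat) by lia. subst. simpl phi. unfold Aphi, Bphi. rewrite HS0. pose proof scT_pos.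
    replace (0 <=? Bt)%nat with true by reflexivity.
    unfold gind. destruct (Rle_dec (beta * INR N) (INR (hi - 0 + 1))) as [Hr|Hr];
      rewrite Hcond in Hr; destruct (Nat.leb_spec Tt hi); unfold Tt in *; try lia; field; lra.
  - destruct (Nat.eqb_spec x N) as [->|H1]; [|simpl in Hu; lra].
    assert (hi = N) by lia. subst. simpl phi. unfold Aphi, Bphi. rewrite HSN.
    replace (Tt <=? N)%nat with true by (symmetry; apply Nat.leb_le; unfold Tt; lia).
    pose proof scB_lt.
    unfold gind. destruct (Rle_dec (beta * INR N) (INR (N - lo + 1))) as [Hr|Hr];
      rewrite Hcond in Hr; destruct (Nat.leb_spec lo Bt); unfold Bt in *; try lia; field; lra.
Qed.

Lemma diff_le s : valid N s -> Rabs (gind N beta s - phi s) <= uab N s.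
Proof.
  intros Hv. destruct s as [[x lo] hi].
  destruct (Nat.eqb x 0 || Nat.eqb x N)%bool eqn:E.
  - assert (uab N (x, lo, hi) = 0) by (simpl; rewrite E; auto).
    rewrite phi_abs by auto. rewrite Rminus_diag, Rabs_R0. lra.
  - assert (uab N (x, lo, hi) = 1) by (simpl; rewrite E; auto). rewrite H.
    pose proof (phi_bounds _ Hv). unfold gind.
    destruct Rle_dec; apply Rabs_le; lra.
Qed.

Lemma main_n x0 : (x0 <= N)%nat ->
  prob_range_ge N p x0 beta = phi (x0, x0, x0).
Proof.
  intros Hx. unfold prob_range_ge. apply Rlim_eq.
  intros eps He.
  assert (Hv : valid N (x0, x0, x0)) by (simpl; lia).
  destruct (V_uab_lim N p _ ltac:(lra) Hv ltac:(lia) eps He) as [n0 Hn0].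
  exists n0. intros n Hn. unfold Rdist. rewrite upto_V by auto.
  rewrite <- (V_harm N p n phi (x0, x0, x0)) by (auto using phi_harm).
  specialize (Hn0 n Hn).
  assert (H1 : V N p n (fun s => gind N beta s - phi s) (x0, x0, x0) <= V N p n (uab N) (x0, x0, x0)).
  { apply V_mono; auto; [lra|]. intros s Hs. pose proof (diff_le s Hs).
    pose proof (Rle_abs (gind N beta s - phi s)); pose proof (Rle_abs (-(gind N beta s - phi s))); rewrite Rabs_Ropp in *; lra. }
  assert (H2 : V N p n (fun s => phi s - gind N beta s) (x0, x0, x0) <= V N p n (uab N) (x0, x0, x0)).
  { apply V_mono; auto; [lra|]. intros s Hs. pose proof (diff_le s Hs).
    pose proof (Rle_abs (gind N beta s - phi s)); pose proof (Rle_abs (-(gind N beta s - phi s))); rewrite Rabs_Ropp in *; lra. }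
  rewrite V_minus in H1, H2. apply Rabs_def1; lra.
Qed.

End PHI.

Lemma cv_ev (u v : nat -> R) l :
  (exists N0, forall N, (N >= N0)%nat -> u N = v N) -> Un_cv v l -> Un_cv u l.
Proof.
  intros [N0 H] Hv eps He. destruct (Hv eps He) as [N1 H1].
  exists (Nat.max N0 N1). intros n Hn. rewrite H by lia. apply H1; lia.
Qed.

Lemma cv_const c : Un_cv (fun _ => c) c.
Proof. intros eps He. exists 0%nat. intros. unfold Rdist. rewrite Rminus_diag, Rabs_R0. lra. Qed.

Lemma cv_inv (u : nat -> R) l : Un_cv u l -> l <> 0 -> Un_cv (fun n => / u n) (/ l).
Proof.
  intros H Hl.
  assert (Hc : continuity_pt (fun x => / x) l).
  { change (fun x => / x) with (/ id)%F. apply continuity_pt_inv; auto.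
    apply derivable_continuous_pt, derivable_pt_id. }
  exact (continuity_seq (fun x => / x) u l Hc H).
Qed.

Lemma cv_div (u v : nat -> R) a b : Un_cv u a -> Un_cv v b -> b <> 0 ->
  Un_cv (fun n => u n / v n) (a / b).
Proof. intros Hu Hv Hb. unfold Rdiv. apply CV_mult; auto. apply cv_inv; auto. Qed.

Lemma cv_exp (u : nat -> R) l : Un_cv u l -> Un_cv (fun n => exp (u n)) (exp l).
Proof.
  intros H. apply (continuity_seq exp u l); auto.
  apply derivable_continuous_pt, derivable_pt_exp.
Qed.

Lemma cv_ext (u v : nat -> R) l : (forall n, u n = v n) -> Un_cv v l -> Un_cv u l.
Proof. intros E H. apply cv_ev with v; auto. exists 0%nat; auto. Qed.

Lemma cv_invN C : Un_cv (fun N => C / INR N) 0.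
Proof.
  intros eps He.
  destruct (archimed (Rabs C / eps)) as [H1 _].
  assert (Hz : (0 <= up (Rabs C / eps))%Z).
  { apply le_IZR. assert (0 <= Rabs C / eps) by (unfold Rdiv; apply Rmult_le_pos; [apply Rabs_pos|left; apply Rinv_0_lt_compat; lra]). lra. }
  exists (S (Z.to_nat (up (Rabs C / eps)))). intros n Hn.
  unfold Rdist. rewrite Rminus_0_r.
  assert (Hn' : IZR (up (Rabs C / eps)) < INR n).
  { rewrite <- (Z2Nat.id _ Hz), <- INR_IZR_INZ. apply lt_INR. lia. }
  assert (0 < INR n) by (pose proof (IZR_le _ _ Hz); simpl in *; lra).
  unfold Rdiv. rewrite Rabs_mult, Rabs_inv, (Rabs_pos_eq (INR n)) by lra.
  apply Rmult_lt_reg_r with (INR n); auto.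
  rewrite Rmult_assoc, Rinv_l, Rmult_1_r by lra.
  assert (Rabs C < eps * INR n).
  { assert (Rabs C / eps < INR n) by lra.
    apply Rmult_lt_reg_r with (/ eps). apply Rinv_0_lt_compat; lra.
    replace (eps * INR n * / eps) with (INR n) by (field; lra). exact H0. }
  lra.
Qed.

Lemma cv_squeeze0 (u v : nat -> R) l :
  (exists N0, forall N, (N >= N0)%nat -> Rabs (u N - l) <= v N) -> Un_cv v 0 -> Un_cv u l.
Proof.
  intros [N0 H] Hv eps He. destruct (Hv eps He) as [N1 H1].
  exists (Nat.max N0 N1). intros n Hn. unfold Rdist.
  specialize (H n ltac:(lia)). specialize (H1 n ltac:(lia)). unfold Rdist in H1.
  rewrite Rminus_0_r in H1. pose proof (Rle_abs (v n)). lra.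
Qed.

Definition close (u : nat -> nat) (g : R) : Prop :=
  exists C N0, forall N, (N >= N0)%nat -> Rabs (INR (u N) - g * INR N) <= C.

Lemma close_cv u g : close u g -> Un_cv (fun N => INR (u N) / INR N) g.
Proof.
  intros [C [N0 H]]. apply cv_squeeze0 with (fun N => C / INR N); [|apply cv_invN].
  exists (S N0). intros N HN.
  assert (0 < INR N) by (apply lt_0_INR; lia).
  replace (INR (u N) / INR N - g) with ((INR (u N) - g * INR N) / INR N) by (field; lra).
  unfold Rdiv. rewrite Rabs_mult, Rabs_inv, (Rabs_pos_eq (INR N)) by lra.
  apply Rmult_le_compat_r; [left; apply Rinv_0_lt_compat; lra|]. apply H; lia.
Qed.

Lemma ceil_ex t : exists K, forall m, t <= INR m <-> (K <= m)%nat.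
Proof.
  destruct (Rle_lt_dec t 0) as [Ht|Ht].
  { exists 0%nat. intros m; split; [lia|]. intros _. pose proof (pos_INR m); lra. }
  destruct (archimed t) as [H1 _].
  assert (Hz : (0 <= up t)%Z) by (apply le_IZR; simpl; lra).
  assert (Hex : t <= INR (Z.to_nat (up t))) by (rewrite INR_IZR_INZ, Z2Nat.id by exact Hz; lra).
  assert (Gen : forall n, t <= INR n -> exists K, (K <= n)%nat /\ t <= INR K /\
     (forall m, (m < K)%nat -> INR m < t)).
  { induction n; intros Hn.
    - exists 0%nat. repeat split; auto; lia.
    - destruct (Rle_lt_dec t (INR n)) as [H|H].
      + destruct (IHn H) as [K [HK1 [HK2 HK3]]]. exists K; repeat split; auto.
      + exists (S n). repeat split; auto. intros m Hm.
        apply Rle_lt_trans with (INR n); auto. apply le_INR; lia. }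
  destruct (Gen _ Hex) as [K [_ [HK2 HK3]]]. exists K. intros m; split.
  - intros Hm. destruct (Nat.le_gt_cases K m) as [|Hlt]; auto. specialize (HK3 m Hlt). lra.
  - intros Hm. apply Rle_trans with (INR K); auto. apply le_INR; auto.
Qed.

Definition Kc (t : R) : nat := epsilon (inhabits 0%nat) (fun K => forall m, t <= INR m <-> (K <= m)%nat).

Lemma Kc_spec t : forall m, t <= INR m <-> (Kc t <= m)%nat.
Proof. unfold Kc. apply epsilon_spec. apply ceil_ex. Qed.

Lemma Kc_bounds t : 0 <= t -> t <= INR (Kc t) < t + 1.
Proof.
  intros Ht. split.
  - apply Kc_spec. lia.
  - destruct (Kc t) eqn:E. { simpl; lra. }
    assert (~ t <= INR n) by (rewrite Kc_spec; lia).
    rewrite S_INR. lra.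
Qed.

Lemma start_bounds alpha N : 0 <= alpha ->
  INR (start alpha N) <= alpha * INR N < INR (start alpha N) + 1.
Proof.
  intros Ha. unfold start.
  pose proof (base_Int_part (alpha * INR N)) as [H1 H2].
  assert (0 <= alpha * INR N) by (apply Rmult_le_pos; auto; apply pos_INR).
  assert (Hz : (0 <= Int_part (alpha * INR N))%Z) by (assert (Hm : (-1 < Int_part (alpha * INR N))%Z) by (apply lt_IZR; simpl; lra); lia).
  rewrite INR_IZR_INZ, Z2Nat.id by auto. lra.
Qed.

Lemma prob_const N p x beta c : (x <= N)%nat ->
  (forall s, valid N s -> gind N beta s = c) -> prob_range_ge N p x beta = c.
Proof.
  intros Hx H. unfold prob_range_ge. apply Rlim_eq.
  apply cv_ext with (fun _ => c); [|apply cv_const].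
  intros n. rewrite upto_V by auto.
  rewrite (V_ext N p n _ (fun _ => c)); auto. apply V_const. simpl; lia.
Qed.

Lemma ev_large b C : 0 < b -> exists N0, forall N, (N >= N0)%nat -> C < b * INR N.
Proof.
  intros Hb. destruct (archimed (Rabs C / b)) as [H1 _].
  assert (0 <= Rabs C / b) by (unfold Rdiv; apply Rmult_le_pos; [apply Rabs_pos|left; apply Rinv_0_lt_compat; lra]).
  assert (Hz : (0 <= up (Rabs C / b))%Z) by (apply le_IZR; simpl; lra).
  exists (Z.to_nat (up (Rabs C / b))). intros N HN.
  assert (IZR (up (Rabs C / b)) <= INR N).
  { rewrite <- (Z2Nat.id _ Hz), <- INR_IZR_INZ. apply le_INR. lia. }
  assert (H3 : Rabs C / b < INR N) by lra.
  assert (Rabs C < b * INR N).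
  { apply Rmult_lt_reg_r with (/ b). apply Rinv_0_lt_compat; lra.
    replace (b * INR N * / b) with (INR N) by (field; lra). exact H3. }
  pose proof (Rle_abs C). lra.
Qed.

Lemma INR_gt_nat (m k : nat) : INR k < INR m + 1 -> (k <= m)%nat.
Proof.
  intros H. destruct (Nat.le_gt_cases k m) as [|Hlt]; auto.
  apply le_INR in Hlt. rewrite S_INR in Hlt. lra.
Qed.

Lemma INR_lt_nat (m k : nat) : INR m < INR k -> (m < k)%nat.
Proof. intros H. apply INR_lt; auto. Qed.

Definition famOK (p : R) (N : nat) (sc : nat -> R) : Prop :=
  0 < p < 1 /\ sc 0%nat = 0 /\ sc N = 1 /\
  (forall i j, (i < j <= N)%nat -> sc i < sc j) /\
  (forall x, (0 < x < N)%nat -> sc x = p * sc (S x) + (1 - p) * sc (Nat.pred x)).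

Section FAM.
Variables (alpha beta : R) (pN : nat -> R) (scN : nat -> nat -> R) (sig : R -> R).
Hypothesis Ha : 0 < alpha < 1.
Hypothesis Hfam : exists N0, forall N, (N >= N0)%nat -> famOK (pN N) N (scN N).
Hypothesis Hsc : forall u g, 0 <= g <= 1 -> close u g -> Un_cv (fun N => scN N (u N)) (sig g).

Definition PP (N : nat) := prob_range_ge N (pN N) (start alpha N) beta.
Definition x0 (N : nat) := start alpha N.
Definition KK (N : nat) := Kc (beta * INR N).

Lemma famN1 : exists N0, forall N, (N >= N0)%nat -> famOK (pN N) N (scN N) /\ (1 <= N)%nat.
Proof.
  destruct Hfam as [N0 H]. exists N0. intros N HN. split; auto.
  destruct (H N HN) as [_ [H0 [H1 _]]]. destruct N; [rewrite H0 in H1; lra|lia].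
Qed.

Lemma x0_bounds N : INR (x0 N) <= alpha * INR N < INR (x0 N) + 1.
Proof. apply start_bounds; lra. Qed.

Lemma x0_le N : (x0 N <= N)%nat.
Proof.
  pose proof (x0_bounds N). apply INR_le. pose proof (pos_INR N). nra.
Qed.

Lemma KK_bounds N : 0 <= beta -> beta * INR N <= INR (KK N) < beta * INR N + 1.
Proof. intros Hb. apply Kc_bounds. apply Rmult_le_pos; auto; apply pos_INR. Qed.

Lemma close_x0 : close x0 alpha.
Proof.
  exists 1, 0%nat. intros N _. pose proof (x0_bounds N). apply Rabs_le. lra.
Qed.

Lemma Reg5 : 1 < beta -> Un_cv PP 0.
Proof.
  intros Hb. apply cv_ev with (fun _ => 0); [|apply cv_const].
  destruct (ev_large (beta - 1) 1 ltac:(lra)) as [N0 H0].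
  exists N0. intros N HN. unfold PP. apply prob_const. apply x0_le.
  intros [[x lo] hi] Hv. simpl in Hv. unfold gind.
  destruct Rle_dec as [Hr|]; auto. exfalso.
  specialize (H0 N HN). idtac.
  assert (INR (hi - lo + 1) <= INR N + 1).
  { rewrite <- S_INR. apply le_INR. lia. }
  lra.
Qed.

Lemma K_ge2 : 0 < beta -> exists N0, forall N, (N >= N0)%nat -> (2 <= KK N)%nat.
Proof.
  intros Hb. destruct (ev_large beta 1 Hb) as [N0 H0]. exists N0. intros N HN.
  specialize (H0 N HN). pose proof (KK_bounds N ltac:(lra)).
  apply INR_lt_nat. simpl. lra.
Qed.

Lemma K_le : 0 <= beta <= 1 -> forall N, (KK N <= N + 1)%nat.
Proof.
  intros Hb N. pose proof (KK_bounds N ltac:(lra)). apply INR_gt_nat.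
  rewrite plus_INR. simpl. pose proof (pos_INR N). nra.
Qed.

Lemma prob_phi : 0 < beta <= 1 -> exists N0, forall N, (N >= N0)%nat ->
  PP N = phi N (KK N) (scN N) (x0 N, x0 N, x0 N) /\ (2 <= KK N)%nat /\ (1 <= N)%nat.
Proof.
  intros Hb. destruct famN1 as [N0 H0]. destruct (K_ge2 ltac:(lra)) as [N1 H1].
  exists (Nat.max N0 N1). intros N HN.
  destruct (H0 N ltac:(lia)) as [[Hp [Hs0 [HsN [Hm Hh]]]] HN1].
  specialize (H1 N ltac:(lia)). split; [|split; auto].
  unfold PP. apply main_n; auto.
  - split; auto. apply K_le; lra.
  - apply Kc_spec.
  - apply x0_le.
Qed.

Lemma close_T : 0 < beta <= 1 -> close (fun N => Tt (KK N)) beta.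
Proof.
  intros Hb. destruct (K_ge2 ltac:(lra)) as [N1 H1]. exists 1, N1. intros N HN.
  specialize (H1 N HN). pose proof (KK_bounds N ltac:(lra)).
  unfold Tt. rewrite minus_INR by lia. simpl. apply Rabs_le. lra.
Qed.

Lemma close_B : 0 < beta <= 1 -> close (fun N => Bt N (KK N)) (1 - beta).
Proof.
  intros Hb. exists 1, 0%nat. intros N _. pose proof (KK_bounds N ltac:(lra)).
  pose proof (K_le ltac:(lra) N).
  unfold Bt. rewrite minus_INR by lia. rewrite plus_INR. simpl. apply Rabs_le. lra.
Qed.

Lemma Tle : beta <= alpha -> 0 <= beta -> forall N, (Tt (KK N) <= x0 N)%nat.
Proof.
  intros Hb Hb0 N. unfold Tt. pose proof (x0_bounds N).
  assert (KK N <= x0 N + 1)%nat.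
  { unfold KK. apply Kc_spec. rewrite plus_INR. simpl. pose proof (pos_INR N).
    assert (0 <= (alpha - beta) * INR N) by (apply Rmult_le_pos; lra). lra. }
  lia.
Qed.

Lemma Tgt : alpha < beta -> exists N0, forall N, (N >= N0)%nat -> (x0 N < Tt (KK N))%nat.
Proof.
  intros Hb. destruct (ev_large (beta - alpha) 1 ltac:(lra)) as [N0 H0]. exists N0.
  intros N HN. specialize (H0 N HN). pose proof (x0_bounds N). pose proof (KK_bounds N ltac:(lra)).
  unfold Tt. assert (x0 N + 1 < KK N)%nat; [|lia].
  apply INR_lt_nat. rewrite plus_INR. simpl. lra.
Qed.

Lemma Bge : beta <= 1 - alpha -> 0 <= beta -> forall N, (x0 N <= Bt N (KK N))%nat.
Proof.
  intros Hb Hb0 N. unfold Bt. pose proof (x0_bounds N). pose proof (x0_le N).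
  assert (KK N <= N + 1 - x0 N)%nat.
  { unfold KK. apply Kc_spec. rewrite minus_INR by lia. rewrite plus_INR. simpl.
    pose proof (pos_INR N).
    assert (0 <= (1 - alpha - beta) * INR N) by (apply Rmult_le_pos; lra). lra. }
  lia.
Qed.

Lemma Blt : 1 - alpha < beta -> beta <= 1 -> exists N0, forall N, (N >= N0)%nat -> (Bt N (KK N) < x0 N)%nat.
Proof.
  intros Hb Hb1. destruct (ev_large (beta - (1 - alpha)) 2 ltac:(lra)) as [N0 H0]. exists N0.
  intros N HN. specialize (H0 N HN). pose proof (K_le ltac:(lra) N). pose proof (x0_bounds N). pose proof (KK_bounds N ltac:(lra)).
  unfold Bt. assert (N + 1 < KK N + x0 N)%nat; [|lia].
  apply INR_lt_nat. rewrite !plus_INR. simpl. lra.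
Qed.

Lemma Reg1 : 0 <= beta -> beta <= alpha -> beta <= 1 - alpha -> Un_cv PP 1.
Proof.
  intros Hb0 Hb1 Hb2. apply cv_ev with (fun _ => 1); [|apply cv_const].
  destruct famN1 as [N0 H0]. exists N0. intros N HN.
  destruct (H0 N HN) as [[Hp [Hs0 [HsN [Hm Hh]]]] HN1].
  destruct (Nat.le_gt_cases (KK N) 1) as [HK|HK].
  - unfold PP. apply prob_const. apply x0_le.
    intros [[x lo] hi] Hv. simpl in Hv. unfold gind.
    destruct Rle_dec as [|Hr]; auto. exfalso. apply Hr. apply Kc_spec. fold (KK N). lia.
  - unfold PP. rewrite main_n with (K := KK N) (sc := scN N); auto.
    + simpl. unfold Aphi, Bphi.
      replace (Tt (KK N) <=? start alpha N)%nat with true by (symmetry; apply Nat.leb_le; apply Tle; auto).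
      replace (start alpha N <=? Bt N (KK N))%nat with true by (symmetry; apply Nat.leb_le; apply Bge; auto).
      ring.
    + split; [lia|]. apply K_le; lra.
    + apply Kc_spec.
    + apply x0_le.
Qed.

Definition sX N := scN N (x0 N).
Definition sT N := scN N (Tt (KK N)).
Definition sB N := scN N (Bt N (KK N)).

Lemma cvX : Un_cv sX (sig alpha).
Proof. apply Hsc; [lra|apply close_x0]. Qed.
Lemma cvT : 0 < beta <= 1 -> Un_cv sT (sig beta).
Proof. intros. apply (Hsc (fun N => Tt (KK N))); [lra|apply close_T; auto]. Qed.
Lemma cvB : 0 < beta <= 1 -> Un_cv sB (sig (1 - beta)).
Proof. intros. apply (Hsc (fun N => Bt N (KK N))); [lra|apply close_B; auto]. Qed.

Lemma cv_A2 : 0 < beta <= 1 -> sig beta <> 0 ->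
  Un_cv (fun N => sX N / sT N * (1 - sT N)) (sig alpha / sig beta * (1 - sig beta)).
Proof.
  intros Hb Hs. apply CV_mult. apply cv_div; auto using cvX, cvT.
  apply CV_minus; [apply cv_const|apply cvT; auto].
Qed.

Lemma cv_B2 : 0 < beta <= 1 -> sig (1 - beta) <> 1 ->
  Un_cv (fun N => (1 - sX N) / (1 - sB N) * sB N) ((1 - sig alpha) / (1 - sig (1 - beta)) * sig (1 - beta)).
Proof.
  intros Hb Hs. apply CV_mult; [|apply cvB; auto]. apply cv_div.
  - apply CV_minus; [apply cv_const|apply cvX].
  - apply CV_minus; [apply cv_const|apply cvB; auto].
  - lra.
Qed.

Lemma Reg2 : alpha < beta -> beta <= 1 - alpha -> sig beta <> 0 ->
  Un_cv PP (sig alpha / sig beta * (1 - sig beta) + sig alpha).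
Proof.
  intros Hb1 Hb2 Hs.
  apply cv_ev with (fun N => sX N / sT N * (1 - sT N) + sX N).
  - destruct (prob_phi ltac:(lra)) as [N0 H0]. destruct (Tgt Hb1) as [N1 H1].
    exists (Nat.max N0 N1). intros N HN. destruct (H0 N ltac:(lia)) as [-> _].
    simpl. unfold Aphi, Bphi.
    replace (Tt (KK N) <=? x0 N)%nat with false by (symmetry; apply Nat.leb_gt; apply H1; lia).
    replace (x0 N <=? Bt N (KK N))%nat with true by (symmetry; apply Nat.leb_le; apply Bge; lra).
    reflexivity.
  - apply CV_plus; [apply cv_A2; auto; lra|apply cvX].
Qed.

Lemma Reg3 : 1 - alpha < beta -> beta <= alpha -> sig (1 - beta) <> 1 ->
  Un_cv PP (1 - sig alpha + (1 - sig alpha) / (1 - sig (1 - beta)) * sig (1 - beta)).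
Proof.
  intros Hb1 Hb2 Hs.
  apply cv_ev with (fun N => 1 - sX N + (1 - sX N) / (1 - sB N) * sB N).
  - destruct (prob_phi ltac:(lra)) as [N0 H0]. destruct (Blt Hb1 ltac:(lra)) as [N1 H1].
    exists (Nat.max N0 N1). intros N HN. destruct (H0 N ltac:(lia)) as [-> _].
    simpl. unfold Aphi, Bphi.
    replace (Tt (KK N) <=? x0 N)%nat with true by (symmetry; apply Nat.leb_le; apply Tle; lra).
    replace (x0 N <=? Bt N (KK N))%nat with false by (symmetry; apply Nat.leb_gt; apply H1; lia).
    reflexivity.
  - apply CV_plus; [apply CV_minus; [apply cv_const|apply cvX]|apply cv_B2; auto; lra].
Qed.

Lemma Reg4 : alpha < beta -> 1 - alpha < beta -> beta <= 1 -> sig beta <> 0 -> sig (1 - beta) <> 1 ->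
  Un_cv PP (sig alpha / sig beta * (1 - sig beta) +
            (1 - sig alpha) / (1 - sig (1 - beta)) * sig (1 - beta)).
Proof.
  intros Hb1 Hb2 Hb3 Hs1 Hs2.
  apply cv_ev with (fun N => sX N / sT N * (1 - sT N) + (1 - sX N) / (1 - sB N) * sB N).
  - destruct (prob_phi ltac:(lra)) as [N0 H0]. destruct (Tgt Hb1) as [N1 H1].
    destruct (Blt Hb2 Hb3) as [N2 H2].
    exists (Nat.max N0 (Nat.max N1 N2)). intros N HN. destruct (H0 N ltac:(lia)) as [-> _].
    simpl. unfold Aphi, Bphi.
    replace (Tt (KK N) <=? x0 N)%nat with false by (symmetry; apply Nat.leb_gt; apply H1; lia).
    replace (x0 N <=? Bt N (KK N))%nat with false by (symmetry; apply Nat.leb_gt; apply H2; lia).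
    reflexivity.
  - apply CV_plus; [apply cv_A2; auto; lra|apply cv_B2; auto; lra].
Qed.

End FAM.

Definition scS (N x : nat) : R := INR x / INR N.

Lemma famS : exists N0, forall N, (N >= N0)%nat -> famOK (1/2) N (scS N).
Proof.
  exists 1%nat. intros N HN. assert (0 < INR N) by (apply lt_0_INR; lia).
  unfold famOK, scS. repeat split.
  - lra.
  - lra.
  - simpl. unfold Rdiv; ring.
  - field; lra.
  - intros i j Hij. unfold Rdiv. apply Rmult_lt_compat_r. apply Rinv_0_lt_compat; lra.
    apply lt_INR; lia.
  - intros x Hx. rewrite S_INR. destruct x; [lia|]. simpl Nat.pred. rewrite S_INR. field. lra.
Qed.

Lemma HscS : forall u g, 0 <= g <= 1 -> close u g -> Un_cv (fun N => scS N (u N)) (id g).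
Proof. intros u g _ H. unfold scS, id. apply close_cv; auto. Qed.

Lemma exp_pow_nat x n : exp x ^ n = exp (INR n * x).
Proof.
  induction n. { simpl. rewrite Rmult_0_l, exp_0. reflexivity. }
  rewrite S_INR. simpl pow. rewrite IHn.
  replace ((INR n + 1) * x) with (x + INR n * x) by ring. rewrite exp_plus. reflexivity.
Qed.

Lemma cv_squeeze (a b u : nat -> R) l :
  (exists N0, forall N, (N >= N0)%nat -> a N <= u N <= b N) -> Un_cv a l -> Un_cv b l -> Un_cv u l.
Proof.
  intros [N0 H] Ha Hb eps He. destruct (Ha eps He) as [N1 H1]. destruct (Hb eps He) as [N2 H2].
  exists (Nat.max N0 (Nat.max N1 N2)). intros n Hn.
  specialize (H n ltac:(lia)). specialize (H1 n ltac:(lia)). specialize (H2 n ltac:(lia)).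
  unfold Rdist in *. apply Rabs_def2 in H1, H2. apply Rabs_def1; lra.
Qed.

Lemma cv_ratio k : Un_cv (fun N => INR N / (INR N + k)) 1.
Proof.
  apply cv_squeeze0 with (fun N => (2 * Rabs k) / INR N); [|apply cv_invN].
  destruct (ev_large 1 (2 * Rabs k) ltac:(lra)) as [N0 H0].
  exists (S N0). intros N HN. specialize (H0 N ltac:(lia)). rewrite Rmult_1_l in H0.
  pose proof (Rle_abs k). pose proof (Rle_abs (-k)). rewrite Rabs_Ropp in *.
  assert (0 < INR N) by (apply lt_0_INR; lia).
  assert (Hk : 0 < INR N + k) by lra.
  replace (INR N / (INR N + k) - 1) with (- k / (INR N + k)) by (field; lra).
  unfold Rdiv. rewrite Rabs_mult, Rabs_inv, Rabs_Ropp, (Rabs_pos_eq (INR N + k)) by lra.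
  assert (Hi : / (INR N + k) <= / (INR N / 2)) by (apply Rinv_le_contravar; lra).
  replace (/ (INR N / 2)) with (2 * / INR N) in Hi by (field; lra).
  assert (0 <= Rabs k) by apply Rabs_pos.
  replace (2 * Rabs k * / INR N) with (Rabs k * (2 * / INR N)) by ring.
  apply Rmult_le_compat_l; auto.
Qed.

Section ASYM.
Variable c : R.
Hypothesis Hc : 0 < c.

Definition pA (N : nat) : R := 1/2 + c / INR N.
Definition rA (N : nat) : R := (INR N - 2 * c) / (INR N + 2 * c).
Definition scA (N x : nat) : R := (1 - rA N ^ x) / (1 - rA N ^ N).
Definition uu := exp (-4 * c * 1).
Definition sigA (g : R) : R := (1 - exp (-4 * c * g)) / (1 - uu).

Lemma ev_big : exists N0, forall N, (N >= N0)%nat -> 4 * c < INR N.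
Proof.
  destruct (ev_large 1 (4 * c) ltac:(lra)) as [N0 H0]. exists N0. intros N HN.
  specialize (H0 N HN). lra.
Qed.

Lemma rA_bounds N : 4 * c < INR N -> 0 < rA N < 1.
Proof.
  intros H. unfold rA. split.
  - apply Rdiv_lt_0_compat; lra.
  - apply Rmult_lt_reg_r with (INR N + 2 * c); [lra|]. unfold Rdiv.
    rewrite Rmult_assoc, Rinv_l, Rmult_1_r by lra. lra.
Qed.

Lemma pow_lt_mono (r : R) i j : 0 < r < 1 -> (i < j)%nat -> r ^ j < r ^ i.
Proof.
  intros Hr Hij. replace j with (i + (j - i))%nat by lia. rewrite pow_add.
  assert (0 < r ^ i) by (apply pow_lt; lra).
  assert (r ^ (j - i) < 1).
  { destruct (j - i)%nat eqn:E; [lia|]. simpl.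
    assert (r ^ n <= 1). { rewrite <- (pow1 n). apply pow_incr; lra. }
    assert (0 <= r ^ n) by (apply pow_le; lra). nra. }
  nra.
Qed.

Lemma famA : exists N0, forall N, (N >= N0)%nat -> famOK (pA N) N (scA N).
Proof.
  destruct ev_big as [N0 H0]. exists N0. intros N HN. specialize (H0 N HN).
  pose proof (rA_bounds N H0) as Hr.
  assert (HN0 : 0 < INR N) by lra.
  assert (HN1 : (0 < N)%nat) by (apply INR_lt; simpl; lra).
  assert (HrN : rA N ^ N < 1) by (rewrite <- (pow_O (rA N)); apply pow_lt_mono; auto).
  assert (Hc4 : c / INR N < 1/4).
  { apply Rmult_lt_reg_r with (INR N); auto. unfold Rdiv. rewrite Rmult_assoc, Rinv_l by lra. lra. }
  assert (Hc0 : 0 < c / INR N) by (apply Rdiv_lt_0_compat; lra).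
  unfold famOK, pA, scA. repeat split.
  - lra.
  - lra.
  - simpl. field. lra.
  - field. lra.
  - intros i j Hij. unfold Rdiv. apply Rmult_lt_compat_r. apply Rinv_0_lt_compat; lra.
    pose proof (pow_lt_mono (rA N) i j Hr ltac:(lia)). lra.
  - intros x Hx. destruct x; [lia|]. simpl Nat.pred.
    assert (Hpr : (1/2 + c / INR N) * rA N = 1 - (1/2 + c / INR N)).
    { unfold rA. field. lra. }
    simpl pow. 
    assert (E : rA N * rA N ^ x = (1/2 + c / INR N) * (rA N * (rA N * rA N ^ x)) +
                (1 - (1/2 + c / INR N)) * rA N ^ x).
    { rewrite <- Hpr.
      transitivity (rA N * rA N ^ x * ((1/2 + c / INR N) * rA N + (1/2 + c / INR N))); [|ring].
      replace ((1/2 + c / INR N) * rA N + (1/2 + c / INR N)) with 1 by lra. ring. }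
    assert (E2 : 1 - rA N * rA N ^ x = (1/2 + c / INR N) * (1 - rA N * (rA N * rA N ^ x)) +
                (1 - (1/2 + c / INR N)) * (1 - rA N ^ x)).
    { lra. }
    rewrite E2. field. lra.
Qed.

Lemma cv_lin u g k : close u g ->
  Un_cv (fun N => INR (u N) * (- (4 * c) / (INR N + k))) (-4 * c * g).
Proof.
  intros Hu. apply cv_ev with (fun N => - (4 * c) * (INR (u N) / INR N) * (INR N / (INR N + k))).
  - destruct (ev_large 1 (Rabs k) ltac:(lra)) as [N0 H0]. exists (S N0). intros N HN.
    specialize (H0 N ltac:(lia)). pose proof (Rle_abs k). pose proof (Rle_abs (-k)). rewrite Rabs_Ropp in *.
    assert (0 < INR N) by (apply lt_0_INR; lia). field. lra.
  - replace (-4 * c * g) with (- (4 * c) * g * 1) by ring.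
    apply CV_mult; [apply CV_mult; [apply cv_const|apply close_cv; auto]|apply cv_ratio].
Qed.

Lemma cv_rpow u g : close u g -> Un_cv (fun N => rA N ^ (u N)) (exp (-4 * c * g)).
Proof.
  intros Hu.
  apply cv_squeeze with (fun N => exp (INR (u N) * (- (4 * c) / (INR N - 2 * c))))
                        (fun N => exp (INR (u N) * (- (4 * c) / (INR N + 2 * c)))).
  - destruct ev_big as [N0 H0]. exists N0. intros N HN. specialize (H0 N HN).
    rewrite <- !exp_pow_nat. split; apply pow_incr; split.
    + left; apply exp_pos.
    + assert (Hz : 1 + 4 * c / (INR N - 2 * c) <= exp (4 * c / (INR N - 2 * c))) by apply exp_ineq1_le.
      replace (- (4 * c) / (INR N - 2 * c)) with (- (4 * c / (INR N - 2 * c))) by (field; lra).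
      rewrite exp_Ropp. unfold rA.
      replace ((INR N - 2 * c) / (INR N + 2 * c)) with (/ (1 + 4 * c / (INR N - 2 * c))) by (field; lra).
      apply Rinv_le_contravar; auto. assert (0 < 4 * c / (INR N - 2 * c)) by (apply Rdiv_lt_0_compat; lra). lra.
    + left; apply rA_bounds; auto.
    + pose proof (exp_ineq1_le (- (4 * c) / (INR N + 2 * c))). unfold rA.
      replace ((INR N - 2 * c) / (INR N + 2 * c)) with (1 + - (4 * c) / (INR N + 2 * c)) by (field; lra).
      auto.
  - apply cv_exp.
    apply cv_ev with (fun N => INR (u N) * (- (4 * c) / (INR N + -2 * c))).
    { exists 0%nat. intros. f_equal. f_equal. ring. }
    apply cv_lin; auto.
  - apply cv_exp. apply cv_lin; auto.
Qed.

Lemma HscA : forall u g, 0 <= g <= 1 -> close u g -> Un_cv (fun N => scA N (u N)) (sigA g).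
Proof.
  intros u g _ Hu. unfold scA, sigA, uu. apply cv_div.
  - apply CV_minus; [apply cv_const|apply cv_rpow; auto].
  - apply CV_minus; [apply cv_const|]. apply (cv_rpow (fun N => N)).
    exists 0, 0%nat. intros. rewrite Rmult_1_l, Rminus_diag, Rabs_R0. lra.
  - assert (exp (-4 * c * 1) < exp 0) by (apply exp_increasing; lra). rewrite exp_0 in H. lra.
Qed.

End ASYM.

Lemma cv_eq u l1 l2 : Un_cv u l1 -> l1 = l2 -> Un_cv u l2.
Proof. intros H ->; auto. Qed.

Lemma E1 c x : exp (-4 * c * (1 - x)) = uu c / exp (-4 * c * x).
Proof.
  unfold uu. replace (-4 * c * (1 - x)) with (-4 * c * 1 + - (-4 * c * x)) by ring.
  rewrite exp_plus, exp_Ropp. reflexivity.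
Qed.
Lemma E2 c x : exp (4 * c * (1 - x)) = exp (-4 * c * x) / uu c.
Proof.
  unfold uu. replace (4 * c * (1 - x)) with (-4 * c * x + - (-4 * c * 1)) by ring.
  rewrite exp_plus, exp_Ropp. reflexivity.
Qed.
Lemma E3 c x : exp (4 * c * x) = / exp (-4 * c * x).
Proof. replace (4 * c * x) with (- (-4 * c * x)) by ring. apply exp_Ropp. Qed.

Lemma E4 c x y : x + y = 1 -> uu c = exp (-4 * c * x) * exp (-4 * c * y).
Proof. intros H. unfold uu. rewrite <- exp_plus. f_equal. rewrite <- H. ring. Qed.

Lemma exp_lt1 c x : 0 < c -> 0 < x -> 0 < exp (-4 * c * x) < 1.
Proof.
  intros. split; [apply exp_pos|]. rewrite <- exp_0. apply exp_increasing. nra.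
Qed.

Lemma exp_lt c x y : 0 < c -> x < y -> exp (-4 * c * y) < exp (-4 * c * x).
Proof. intros. apply exp_increasing. nra. Qed.

Theorem proposition2p1 (alpha : R) (Halpha : 0 < alpha < 1) :
  let a := Rmin alpha (1 - alpha) in
  let b := Rmax alpha (1 - alpha) in
  (* (i) symmetric walk, p_N = 1/2 *)
  (let P := fun (beta : R) (N : nat) =>
              prob_range_ge N (1/2) (start alpha N) beta in
   (forall beta, 0 <= beta <= a -> Un_cv (P beta) 1) /\
   (forall beta, a < beta < b -> Un_cv (P beta) (a / beta)) /\
   (forall beta, b <= beta <= 1 -> Un_cv (P beta) ((1 - beta) / beta)) /\
   (forall beta, 1 < beta -> Un_cv (P beta) 0)) /\
  (* (ii) weakly asymmetric walk, p_N = 1/2 + c/N *)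
  (forall c : R, 0 < c ->
   let P := fun (beta : R) (N : nat) =>
              prob_range_ge N (1/2 + c / INR N) (start alpha N) beta in
   (forall beta, 0 <= beta <= a -> Un_cv (P beta) 1) /\
   (forall beta, alpha <= beta <= 1 - alpha ->
      Un_cv (P beta) ((1 - exp (-4 * c * alpha)) / (1 - exp (-4 * c * beta)))) /\
   (forall beta, 1 - alpha <= beta <= alpha ->
      Un_cv (P beta) ((1 - exp (4 * c * (1 - alpha))) / (1 - exp (4 * c * beta)))) /\
   (forall beta, b <= beta <= 1 ->
      Un_cv (P beta)
        (exp (-4 * c * alpha) * (exp (4 * c * (1 - beta)) - 1) / (1 - exp (-4 * c * beta)))) /\
   (forall beta, 1 < beta -> Un_cv (P beta) 0)).
Proof.
  intros a b.
  pose proof (Rmin_l alpha (1 - alpha)) as Hm1. pose proof (Rmin_r alpha (1 - alpha)) as Hm2.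
  pose proof (Rmax_l alpha (1 - alpha)) as HM1. pose proof (Rmax_r alpha (1 - alpha)) as HM2.
  fold a in Hm1, Hm2. fold b in HM1, HM2.
  assert (Hab : (a = alpha /\ b = 1 - alpha) \/ (a = 1 - alpha /\ b = alpha)).
  { unfold a, b. destruct (Rle_dec alpha (1 - alpha)).
    - left. rewrite Rmin_left, Rmax_right by lra. auto.
    - right. rewrite Rmin_right, Rmax_left by lra. auto. }
  split.
  - intros P. subst P.
    assert (Hf := famS).
    assert (Hs := HscS).
    split; [|split; [|split]].
    + intros beta Hb. apply (Reg1 alpha beta (fun _ => 1/2) scS); auto; lra.
    + intros beta Hb. destruct Hab as [[-> ->]|[-> ->]].
      * eapply cv_eq. apply (Reg2 alpha beta (fun _ => 1/2) scS id); auto; unfold id; lra.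
        unfold id. field. lra.
      * eapply cv_eq. apply (Reg3 alpha beta (fun _ => 1/2) scS id); auto; unfold id; lra.
        unfold id. field. lra.
    + intros beta Hb.
      destruct (Rle_dec beta alpha) as [H1|H1]; destruct (Rle_dec beta (1 - alpha)) as [H2|H2].
      * eapply cv_eq. apply (Reg1 alpha beta (fun _ => 1/2) scS); auto; lra.
        assert (beta = 1/2) by lra. subst. field.
      * eapply cv_eq. apply (Reg3 alpha beta (fun _ => 1/2) scS id); auto; unfold id; lra.
        unfold id. assert (beta = alpha) by lra. subst. field. lra.
      * eapply cv_eq. apply (Reg2 alpha beta (fun _ => 1/2) scS id); auto; unfold id; lra.
        unfold id. assert (beta = 1 - alpha) by lra. subst. field. lra.
      * eapply cv_eq. apply (Reg4 alpha beta (fun _ => 1/2) scS id); auto; unfold id; lra.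
        unfold id. field. lra.
    + intros beta Hb. apply (Reg5 alpha beta (fun _ => 1/2)); auto.
  - intros c Hc P. subst P.
    assert (Hf := famA c Hc).
    assert (Hs := HscA c Hc).
    assert (Hu : 0 < uu c < 1) by (unfold uu; apply exp_lt1; lra).
    assert (HA : 0 < exp (-4 * c * alpha) < 1) by (apply exp_lt1; lra).
    assert (HuA : uu c < exp (-4 * c * alpha)) by (unfold uu; apply exp_lt; lra).
    assert (Hsb : forall beta, 0 < beta <= 1 -> sigA c beta <> 0).
    { intros beta Hb. unfold sigA. pose proof (exp_lt1 c beta Hc ltac:(lra)).
      unfold Rdiv. apply Rmult_integral_contrapositive. split; [lra|]. apply Rinv_neq_0_compat. lra. }
    assert (Hsb1 : forall beta, 0 < beta <= 1 -> sigA c (1 - beta) <> 1).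
    { intros beta Hb. unfold sigA. rewrite E1. pose proof (exp_lt1 c beta Hc ltac:(lra)).
      set (B := exp (-4 * c * beta)) in *.
      assert (uu c / B - uu c = uu c * (1 - B) / B) by (field; lra).
      assert (0 < uu c * (1 - B) / B) by (apply Rdiv_lt_0_compat; nra).
      assert (Hlt : (1 - uu c / B) / (1 - uu c) < 1).
      { apply Rmult_lt_reg_r with (1 - uu c); [lra|].
        replace ((1 - uu c / B) / (1 - uu c) * (1 - uu c)) with (1 - uu c / B) by (field; lra).
        lra. }
      lra. }
    split; [|split; [|split; [|split]]].
    + intros beta Hb. apply (Reg1 alpha beta (pA c) (scA c)); auto; lra.
    + intros beta Hb. destruct (Req_dec beta alpha) as [->|Hne].
      * eapply cv_eq. apply (Reg1 alpha alpha (pA c) (scA c)); auto; lra.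
        field. lra.
      * eapply cv_eq. apply (Reg2 alpha beta (pA c) (scA c) (sigA c)); auto; try lra.
        apply Hsb; lra.
        pose proof (exp_lt1 c beta Hc ltac:(lra)).
        unfold sigA. field. lra.
    + intros beta Hb. destruct (Req_dec beta (1 - alpha)) as [->|Hne].
      * eapply cv_eq. apply (Reg1 alpha (1 - alpha) (pA c) (scA c)); auto; lra.
        assert (Hx : exp 0 < exp (4 * c * (1 - alpha))) by (apply exp_increasing; nra).
        rewrite exp_0 in Hx. field. lra.
      * eapply cv_eq. apply (Reg3 alpha beta (pA c) (scA c) (sigA c)); auto; try lra.
        apply Hsb1; lra.
        pose proof (exp_lt1 c beta Hc ltac:(lra)).
        unfold sigA. rewrite E1, E2, E3. field. repeat split; intro Hz; nra.
    + intros beta Hb.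
      pose proof (exp_lt1 c beta Hc ltac:(lra)).
      destruct (Rle_dec beta alpha) as [H1|H1]; destruct (Rle_dec beta (1 - alpha)) as [H2|H2].
      * eapply cv_eq. apply (Reg1 alpha beta (pA c) (scA c)); auto; lra.
        rewrite E2, (E4 c alpha beta) by lra. replace beta with alpha by lra.
        field. repeat split; intro Hz; nra.
      * eapply cv_eq. apply (Reg3 alpha beta (pA c) (scA c) (sigA c)); auto; try lra.
        apply Hsb1; lra.
        unfold sigA. rewrite E1, E2. replace beta with alpha by lra.
        field. repeat split; intro Hz; nra.
      * eapply cv_eq. apply (Reg2 alpha beta (pA c) (scA c) (sigA c)); auto; try lra.
        apply Hsb; lra.
        unfold sigA. rewrite E2, (E4 c alpha beta) by lra.
        field. repeat split; intro Hz; nra.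
      * eapply cv_eq. apply (Reg4 alpha beta (pA c) (scA c) (sigA c)); auto; try lra.
        apply Hsb; lra. apply Hsb1; lra.
        unfold sigA. rewrite E1, E2.
        field. repeat split; intro Hz; nra.
    + intros beta Hb. apply (Reg5 alpha beta (pA c)); auto.
Qed.
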